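(* Suppose the collective choice problem $\mathcal C$ satisfies Generic Finite Alternatives and the generalized amendment procedure is rich. For any game with $T$ rounds and initial default $x^0$, the unique equilibrium outcome is $\phi_{\mathcal D}^T(x^0)$. Consequently, for $T\ge |X|-1$, a policy is an equilibrium outcome (for some initial default) if and only if it belongs to $E_{\mathcal D}$.
   Context: Voters $N=\{1,\dots,n\}$ ($n$ any positive integer) and a non-voting agenda setter $A$ choose from a finite policy space $X$; each player has a strict (antisymmetric), complete, transitive preference $\succsim_i$ with utility $u_i$ (Generic Finite Alternatives). A voting rule is any collection $\mathcal D\subseteq 2^N$ of winning coalitions; a proposal passes iff all voters in some $D\in\mathcal D$ approve it. Generalized amendment procedure with $T$ rounds: initial default $x^0$; in round $t$ the agenda setter proposes $\hat a^t=(a^t,i)$ from a feasible set $X(h)\subseteq X\times\{0,1\}$ that may depend on the history $h$; if it passes and $i=0$, $a^t$ becomes the next default; if it passes and $i=1$ (adjournment provision), deliberation ends and $a^t$ is implemented; if rejected, the default is unchanged; if no adjournment occurs, the default after round $T$ is implemented. The procedure is rich if at every history $h$, $X(h)\subseteq X\times\{0\}$ or $X(h)\subseteq X\times\{1\}$. Equilibrium: subgame perfect equilibrium with as-if-pivotal voting. Define $M_{\mathcal D}(x)=\{y\in X: y=x \text{ or } \exists D\in\mathcal D \text{ with } y\succ_i x\ \forall i\in D\}$, $\{\phi_{\mathcal D}(x)\}=\arg\max_{y\in M_{\mathcal D}(x)}u_A(y)$, $\phi^T_{\mathcal D}$ its $T$-fold iterate, and $E_{\mathcal D}=\{x\in X: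 x=\phi_{\mathcal D}(x)\}$. *)

(* Defs.v *)
From mathcomp Require Import all_boot.
Set Implicit Arguments. Unset Strict Implicit. Unset Printing Implicit Defensive.

(* A proposal (a, i) : policy a with adjournment flag i (true = 1 = adjournment). *)
Definition proposal (X : finType) := (X * bool)%type.
(* A history entry: a proposal and whether it passed. *)
Definition entry (X : finType) := (proposal X * bool)%type.
Definition history (X : finType) := seq (entry X).

Definition passes (n : nat) (D : {set {set 'I_n}}) (v : 'I_n -> bool) : bool :=
  [exists C in D, C \subset [set i | v i]].

Definition Mset (n : nat) (X : finType) (u : 'I_n -> X -> nat)
  (D : {set {set 'I_n}}) (x : X) : pred X :=
  fun y => (y == x) || [exists C in D, [forall i in C, u i x < u i y]].

(* phi_D(x) : the agenda setter's favourite element of M_D(x) (unique when uA is injective). *)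
Definition phi (n : nat) (X : finType) (uA : X -> nat) (u : 'I_n -> X -> nat)
  (D : {set {set 'I_n}}) (x : X) : X :=
  [arg max_(y > x | Mset u D x y) uA y].

Definition E_D (n : nat) (X : finType) (uA : X -> nat) (u : 'I_n -> X -> nat)
  (D : {set {set 'I_n}}) : pred X := fun x => phi uA u D x == x.

Definition dflt (X : finType) (x0 : X) (h : history X) : X :=
  foldl (fun x (e : entry X) => if e.2 then e.1.1 else x) x0 h.

Definition setter_strategy (X : finType) := history X -> proposal X.
Definition voter_strategies (n : nat) (X : finType) := 'I_n -> history X -> proposal X -> bool.

(* Outcome of the subgame starting at the setter's decision node h with k rounds left. *)
Fixpoint outD (n : nat) (X : finType) (D : {set {set 'I_n}}) (x0 : X)
  (sA : setter_strategy X) (sV : voter_strategies n X) (k : nat) (h : history X) : X :=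
  match k with
  | 0 => dflt x0 h
  | k'.+1 =>
      let a := sA h in
      let p := passes D (fun i => sV i h a) in
      if p && a.2 then a.1 else outD D x0 sA sV k' (rcons h (a, p))
  end.

(* Outcome of the subgame starting at the voting node (h, a), with k rounds left after this one. *)
Definition outV (n : nat) (X : finType) (D : {set {set 'I_n}}) (x0 : X)
  (sA : setter_strategy X) (sV : voter_strategies n X) (k : nat) (h : history X)
  (a : proposal X) : X :=
  let p := passes D (fun i => sV i h a) in
  if p && a.2 then a.1 else outD D x0 sA sV k (rcons h (a, p)).

Definition dev (n : nat) (X : finType) (sV : voter_strategies n X) (i : 'I_n)
  (s : history X -> proposal X -> bool) : voter_strategies n X :=
  fun j => if j == i then s else sV j.

Inductive valid (X : finType) (Xf : history X -> {set proposal X}) : history X -> Prop :=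
| valid_nil : valid Xf [::]
| valid_rcons h a b : valid Xf h -> a \in Xf h -> ~~ (b && a.2) ->
    valid Xf (rcons h (a, b)).

Definition feasibleA (X : finType) (Xf : history X -> {set proposal X})
  (sA : setter_strategy X) : Prop :=
  forall h, valid Xf h -> sA h \in Xf h.

Definition gen_amendment (X : finType) (Xf : history X -> {set proposal X}) : Prop :=
  forall h (x : X), exists b, (x, b) \in Xf h.

Definition rich (X : finType) (Xf : history X -> {set proposal X}) : Prop :=
  forall h, Xf h \subset [set a | ~~ a.2] \/ Xf h \subset [set a | a.2].

(* Subgame perfect equilibrium with as-if-pivotal voting, game with T rounds and initial default x0. *)
Definition is_equilibrium (n : nat) (X : finType) (uA : X -> nat) (u : 'I_n -> X -> nat)
  (D : {set {set 'I_n}}) (Xf : history X -> {set proposal X}) (T : nat) (x0 : X)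
  (sA : setter_strategy X) (sV : voter_strategies n X) : Prop :=
  feasibleA Xf sA /\
  (forall h, valid Xf h -> size h < T ->
     (forall sA', feasibleA Xf sA' ->
        uA (outD D x0 sA' sV (T - size h) h) <= uA (outD D x0 sA sV (T - size h) h)) /\
     (forall i s,
        u i (outD D x0 sA (dev sV i s) (T - size h) h) <= u i (outD D x0 sA sV (T - size h) h))) /\
  (forall h a, valid Xf h -> size h < T -> a \in Xf h ->
     (forall sA', feasibleA Xf sA' ->
        uA (outV D x0 sA' sV (T - size h).-1 h a) <= uA (outV D x0 sA sV (T - size h).-1 h a)) /\
     (forall i s,
        u i (outV D x0 sA (dev sV i s) (T - size h).-1 h a)
          <= u i (outV D x0 sA sV (T - size h).-1 h a)) /\
     (* as-if-pivotal voting *)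
     (forall i,
        let po := if a.2 then a.1 else outD D x0 sA sV (T - size h).-1 (rcons h (a, true)) in
        let fo := outD D x0 sA sV (T - size h).-1 (rcons h (a, false)) in
        (u i fo < u i po -> sV i h a) /\ (u i po < u i fo -> ~~ sV i h a))).

Definition eq_outcome (n : nat) (X : finType) (D : {set {set 'I_n}}) (T : nat) (x0 : X)
  (sA : setter_strategy X) (sV : voter_strategies n X) : X :=
  outD D x0 sA sV T [::].

(* Main.v *)
Require Import Defs.
From mathcomp Require Import all_boot.
Set Implicit Arguments. Unset Strict Implicit.

Lemma Mset_refl n (X : finType) (u : 'I_n -> X -> nat) (D : {set {set 'I_n}}) x : Mset u D x x.
Proof. by rewrite /Mset eqxx. Qed.

Lemma phi_in n (X : finType) (uA : X -> nat) (u : 'I_n -> X -> nat) (D : {set {set 'I_n}}) x :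
  Mset u D x (phi uA u D x).
Proof. rewrite /phi; by case: arg_maxnP => //; apply: Mset_refl. Qed.

Lemma phi_max n (X : finType) (uA : X -> nat) (u : 'I_n -> X -> nat) (D : {set {set 'I_n}}) x y :
  Mset u D x y -> uA y <= uA (phi uA u D x).
Proof. rewrite /phi => Hy; case: arg_maxnP => [|i _ Hi]; first exact: Mset_refl. exact: Hi. Qed.

Lemma phi_ge n (X : finType) (uA : X -> nat) (u : 'I_n -> X -> nat) (D : {set {set 'I_n}}) x :
  uA x <= uA (phi uA u D x).
Proof. apply: phi_max; exact: Mset_refl. Qed.

Lemma iter_ge n (X : finType) (uA : X -> nat) (u : 'I_n -> X -> nat) (D : {set {set 'I_n}}) k x :
  uA x <= uA (iter k (phi uA u D) x).
Proof. elim: k => //= k IH; exact: leq_trans IH (phi_ge _ _ _ _). Qed.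

Lemma Mset_strict n (X : finType) (u : 'I_n -> X -> nat) (D : {set {set 'I_n}}) x y :
  Mset u D x y -> y != x -> exists2 C, C \in D & forall i, i \in C -> u i x < u i y.
Proof.
rewrite /Mset => /orP [/eqP -> | /existsP [C /andP [HC /forallP HF]]]; first by rewrite eqxx.
move=> _; exists C => // i Hi; move: (HF i); by rewrite Hi.
Qed.

Lemma Mset_intro n (X : finType) (u : 'I_n -> X -> nat) (D : {set {set 'I_n}}) x y C :
  C \in D -> (forall i, i \in C -> u i x < u i y) -> Mset u D x y.
Proof.
move=> HC HF; apply/orP; right; apply/existsP; exists C; rewrite HC /=.
apply/forallP => i; apply/implyP; exact: HF.
Qed.

Lemma passes_intro n (D : {set {set 'I_n}}) (v : 'I_n -> bool) (C : {set 'I_n}) :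
  C \in D -> (forall i, i \in C -> v i) -> passes D v.
Proof.
move=> HC HF; apply/existsP; exists C; rewrite HC /=; apply/subsetP => i Hi; rewrite inE; exact: HF.
Qed.

Lemma passes_elim n (D : {set {set 'I_n}}) (v : 'I_n -> bool) :
  passes D v -> exists2 C, C \in D & forall i, i \in C -> v i.
Proof.
move=> /existsP [C /andP [HC /subsetP HS]]; exists C => // i /HS; by rewrite inE.
Qed.

Lemma passes_mono n (D : {set {set 'I_n}}) (v w : 'I_n -> bool) :
  passes D v -> (forall i, v i -> w i) -> passes D w.
Proof.
move=> /passes_elim [C HC HF] Hvw; apply: (passes_intro HC) => i /HF; exact: Hvw.
Qed.

Lemma passes_dev n (D : {set {set 'I_n}}) (v w : 'I_n -> bool) i :
  (forall j, j != i -> v j = w j) -> passes D v -> ~~ passes D w -> v i && ~~ w i.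
Proof.
move=> Heq Hv Hw; case Hvi: (v i) => /=; last first.
  case/negP: Hw; apply: (passes_mono Hv) => j Hj.
  case: (eqVneq j i) => [Eji|Hne]; first by rewrite Eji Hvi in Hj.
  by rewrite -Heq.
apply/negP => Hwi; case/negP: Hw; apply: (passes_mono Hv) => j Hj.
case: (eqVneq j i) => [->//|Hne]; by rewrite -Heq.
Qed.

Lemma outV_eq n (X : finType) (D : {set {set 'I_n}}) x0 sA (sV : voter_strategies n X) k h
  (a : proposal X) po fo :
  po = (if a.2 then a.1 else outD D x0 sA sV k (rcons h (a, true))) ->
  fo = outD D x0 sA sV k (rcons h (a, false)) ->
  outV D x0 sA sV k h a = if passes D (fun i => sV i h a) then po else fo.
Proof.
move=> -> ->; rewrite /outV.
by case: (passes _ _); case: a.2.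
Qed.

Lemma outV_char n (X : finType) (uA : X -> nat) (u : 'I_n -> X -> nat) (D : {set {set 'I_n}})
  x0 sA (sV : voter_strategies n X) k h (a : proposal X) po fo :
  (forall i, injective (u i)) ->
  po = (if a.2 then a.1 else outD D x0 sA sV k (rcons h (a, true))) ->
  fo = outD D x0 sA sV k (rcons h (a, false)) ->
  (forall i, (u i fo < u i po -> sV i h a) /\ (u i po < u i fo -> ~~ sV i h a)) ->
  Mset u D fo (outV D x0 sA sV k h a) /\ (Mset u D fo po -> outV D x0 sA sV k h a = po).
Proof.
move=> Hinj Hpo Hfo Hpiv; rewrite (outV_eq Hpo Hfo).
case: (eqVneq po fo) => [->|Hne].
  by rewrite if_same; split; [apply: Mset_refl | ].
case Hp: (passes _ _); split; [ | by [] | exact: Mset_refl | ].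
- have [C HC HF] := passes_elim Hp; apply: (Mset_intro HC) => i /HF Hv.
  have Hneq : u i po != u i fo by apply/negP => /eqP /Hinj /eqP; rewrite (negbTE Hne).
  rewrite ltn_neqAle eq_sym Hneq /=.
  case: (leqP (u i fo) (u i po)) => // Hlt.
  by move: (proj2 (Hpiv i) Hlt); rewrite Hv.
- move=> /Mset_strict /(_ Hne) [C HC HF].
  have: passes D (fun i => sV i h a).
    apply: (passes_intro HC) => i /HF; exact: (proj1 (Hpiv i)).
  by rewrite Hp.
Qed.

Lemma dflt_rcons (X : finType) (x0 : X) h (e : entry X) :
  dflt x0 (rcons h e) = if e.2 then e.1.1 else dflt x0 h.
Proof. by rewrite /dflt foldl_rcons. Qed.

Lemma outD_agree n (X : finType) (D : {set {set 'I_n}}) x0 (sA sA' : setter_strategy X)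
  (sV : voter_strategies n X) m k h :
  (forall h', m <= size h' -> sA h' = sA' h') -> m <= size h ->
  outD D x0 sA sV k h = outD D x0 sA' sV k h.
Proof.
move=> Hag; elim: k h => [//|k IH] h Hm /=.
rewrite -Hag //; rewrite IH // size_rcons; exact: leqW.
Qed.

Lemma outV_agree n (X : finType) (D : {set {set 'I_n}}) x0 (sA sA' : setter_strategy X)
  (sV : voter_strategies n X) k h a :
  (forall h', size h < size h' -> sA h' = sA' h') ->
  outV D x0 sA sV k h a = outV D x0 sA' sV k h a.
Proof.
move=> Hag; rewrite /outV (@outD_agree _ _ _ _ sA sA' _ (size h).+1) //; by rewrite size_rcons.
Qed.

Lemma mod_feasible (X : finType) (Xf : history X -> {set proposal X}) sA h0 a0 :
  feasibleA Xf sA -> a0 \in Xf h0 ->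
  feasibleA Xf (fun h => if h == h0 then a0 else sA h).
Proof. move=> Hf Ha h Hv; case: eqP => [->//|_]; exact: Hf. Qed.

Lemma astar (X : finType) (Xf : history X -> {set proposal X}) h (y1 y2 : X) :
  gen_amendment Xf -> rich Xf -> (y1, false) \in Xf h \/ (y2, true) \in Xf h.
Proof.
move=> Hg Hr; have [[|] Hb1] := Hg h y1; last by left.
have [b2 Hb2] := Hg h y2.
case: (Hr h) => /subsetP Hs.
  by move: (Hs _ Hb1); rewrite inE.
by move: (Hs _ Hb2); rewrite inE /= => Hb; right; rewrite -Hb.
Qed.

Lemma unique_out n (X : finType) (uA : X -> nat) (u : 'I_n -> X -> nat)
  (D : {set {set 'I_n}}) (Xf : history X -> {set proposal X}) T x0 sA sV :
  injective uA -> (forall i, injective (u i)) ->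
  gen_amendment Xf -> rich Xf ->
  is_equilibrium uA u D Xf T x0 sA sV ->
  forall k h, valid Xf h -> size h + k = T ->
  outD D x0 sA sV k h = iter k (phi uA u D) (dflt x0 h).
Proof.
move=> HuA Hu Hg Hr [Hfeas [Hset Hvote]].
elim=> [//|k IH] h Hvh Hs.
have HsT : size h < T by rewrite -Hs addnS ltnS leq_addr.
have HTk : T - size h = k.+1 by rewrite -Hs addKn.
set x := dflt x0 h; set z := iter k (phi uA u D) x.
have Hch : forall a, a \in Xf h ->
  Mset u D z (outV D x0 sA sV k h a) /\
  (Mset u D z (if a.2 then a.1 else iter k (phi uA u D) a.1) ->
     outV D x0 sA sV k h a = (if a.2 then a.1 else iter k (phi uA u D) a.1)).
  move=> a Ha.
  have Hfo : z = outD D x0 sA sV k (rcons h (a, false)).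
    rewrite IH; first by rewrite dflt_rcons.
    - by apply: valid_rcons.
    - by rewrite size_rcons addSnnS.
  have Hpo : (if a.2 then a.1 else iter k (phi uA u D) a.1) =
             (if a.2 then a.1 else outD D x0 sA sV k (rcons h (a, true))).
    case Ha2: a.2 => //; rewrite IH; first by rewrite dflt_rcons.
    - by apply: valid_rcons => //; rewrite Ha2.
    - by rewrite size_rcons addSnnS.
  apply: outV_char => // i.
  have [_ [_ Hpiv]] := Hvote h a Hvh HsT Ha.
  move: (Hpiv i); rewrite HTk /= -Hfo -Hpo; exact.
have [Hopt _] := Hset h Hvh HsT.
rewrite HTk in Hopt.
have Hout : outD D x0 sA sV k.+1 h = outV D x0 sA sV k h (sA h) by [].
have [Ms _] := Hch _ (Hfeas h Hvh).
rewrite -Hout in Ms.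
have [a [Ha Hpa]] : exists a, a \in Xf h /\
    (if a.2 then a.1 else iter k (phi uA u D) a.1) = phi uA u D z.
  case: (astar h (phi uA u D x) (phi uA u D z) Hg Hr) => Ha.
  - exists (phi uA u D x, false); split => //=; by rewrite -iterSr iterS.
  - by exists (phi uA u D z, true).
have [_ Heq] := Hch a Ha; rewrite Hpa in Heq.
have {}Heq := Heq (phi_in uA u D z).
set sA' := fun h' => if h' == h then a else sA h'.
have := Hopt sA' (mod_feasible Hfeas Ha).
have -> : outD D x0 sA' sV k.+1 h = outV D x0 sA sV k h a.
  rewrite /= /sA' eqxx -/(outV D x0 sA' sV k h a); apply: outV_agree => h' Hh'.
  rewrite /sA'; case: eqP => // E; by rewrite E ltnn in Hh'.
rewrite Heq => Hle; apply: HuA; apply/eqP; rewrite eqn_leq Hle andbT.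
rewrite iterS -/z; exact: phi_max.
Qed.

Definition sV0 n (X : finType) (uA : X -> nat) (u : 'I_n -> X -> nat)
  (D : {set {set 'I_n}}) (T : nat) (x0 : X) : voter_strategies n X :=
  fun i h a => u i (iter (T - size h).-1 (phi uA u D) (dflt x0 h)) <
               u i (if a.2 then a.1 else iter (T - size h).-1 (phi uA u D) a.1).

Definition sA0 n (X : finType) (uA : X -> nat) (u : 'I_n -> X -> nat)
  (D : {set {set 'I_n}}) (Xf : history X -> {set proposal X}) (T : nat) (x0 : X)
  : setter_strategy X :=
  fun h => if (phi uA u D (dflt x0 h), false) \in Xf h then (phi uA u D (dflt x0 h), false)
           else (phi uA u D (iter (T - size h).-1 (phi uA u D) (dflt x0 h)), true).

Definition Lst n (X : finType) (uA : X -> nat) (u : 'I_n -> X -> nat)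
  (D : {set {set 'I_n}}) (Xf : history X -> {set proposal X}) (T : nat) (x0 : X) k :=
  forall h, valid Xf h -> size h + k = T ->
  outD D x0 (sA0 uA u D Xf T x0) (sV0 uA u D T x0) k h = iter k (phi uA u D) (dflt x0 h) /\
  (forall sA', feasibleA Xf sA' ->
     uA (outD D x0 sA' (sV0 uA u D T x0) k h) <= uA (iter k (phi uA u D) (dflt x0 h))) /\
  (forall i s, u i (outD D x0 (sA0 uA u D Xf T x0) (dev (sV0 uA u D T x0) i s) k h)
                 <= u i (iter k (phi uA u D) (dflt x0 h))).

Definition Wv n (X : finType) (uA : X -> nat) (u : 'I_n -> X -> nat)
  (D : {set {set 'I_n}}) (T : nat) (x0 : X) k h (a : proposal X) :=
  if passes D (fun i => sV0 uA u D T x0 i h a)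
  then (if a.2 then a.1 else iter k (phi uA u D) a.1)
  else iter k (phi uA u D) (dflt x0 h).

Lemma sV0_eq n (X : finType) (uA : X -> nat) (u : 'I_n -> X -> nat)
  (D : {set {set 'I_n}}) (T : nat) (x0 : X) k h a i :
  size h + k.+1 = T ->
  sV0 uA u D T x0 i h a = (u i (iter k (phi uA u D) (dflt x0 h)) <
               u i (if a.2 then a.1 else iter k (phi uA u D) a.1)).
Proof. by move=> <-; rewrite /sV0 addKn. Qed.

Lemma Vnode n (X : finType) (uA : X -> nat) (u : 'I_n -> X -> nat)
  (D : {set {set 'I_n}}) (Xf : history X -> {set proposal X}) (T : nat) (x0 : X) k :
  Lst uA u D Xf T x0 k ->
  forall h a, valid Xf h -> size h + k.+1 = T -> a \in Xf h ->
  outV D x0 (sA0 uA u D Xf T x0) (sV0 uA u D T x0) k h a = Wv uA u D T x0 k h a /\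
  (forall sA', feasibleA Xf sA' ->
     uA (outV D x0 sA' (sV0 uA u D T x0) k h a) <= uA (Wv uA u D T x0 k h a)) /\
  (forall i s, u i (outV D x0 (sA0 uA u D Xf T x0) (dev (sV0 uA u D T x0) i s) k h a)
                 <= u i (Wv uA u D T x0 k h a)) /\
  (forall i,
     let po := if a.2 then a.1 else
        outD D x0 (sA0 uA u D Xf T x0) (sV0 uA u D T x0) k (rcons h (a, true)) in
     let fo := outD D x0 (sA0 uA u D Xf T x0) (sV0 uA u D T x0) k (rcons h (a, false)) in
     (u i fo < u i po -> sV0 uA u D T x0 i h a) /\ (u i po < u i fo -> ~~ sV0 uA u D T x0 i h a)).
Proof.
move=> HL h a Hvh Hs Ha.
set sA := sA0 uA u D Xf T x0; set sV := sV0 uA u D T x0.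
set x := dflt x0 h; set z := iter k (phi uA u D) x.
set po := if a.2 then a.1 else iter k (phi uA u D) a.1.
have Hs' : forall b, size (rcons h (a, b)) + k = T by move=> b; rewrite size_rcons addSnnS.
have Hvf : valid Xf (rcons h (a, false)) by apply: valid_rcons.
have Hfo : outD D x0 sA sV k (rcons h (a, false)) = z.
  by have [-> _] := HL _ Hvf (Hs' false); rewrite dflt_rcons.
have Hpo : (if a.2 then a.1 else outD D x0 sA sV k (rcons h (a, true))) = po.
  rewrite /po; case Ha2: a.2 => //.
  have Hvt : valid Xf (rcons h (a, true)) by apply: valid_rcons => //; rewrite Ha2.
  by have [-> _] := HL _ Hvt (Hs' true); rewrite dflt_rcons.
have HV1 : outV D x0 sA sV k h a = Wv uA u D T x0 k h a.
  by rewrite (outV_eq (esym Hpo) (esym Hfo)).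
split => //; split; [|split].
- move=> sA' Hf'; rewrite /outV /Wv -/sV -/x -/z /po.
  case Hp: (passes _ _); case Ha2: a.2 => //=.
  + have Hvt : valid Xf (rcons h (a, true)) by apply: valid_rcons => //; rewrite Ha2.
    have [_ [H2 _]] := HL _ Hvt (Hs' true).
    by move: (H2 _ Hf'); rewrite dflt_rcons.
  + have [_ [H2 _]] := HL _ Hvf (Hs' false).
    by move: (H2 _ Hf'); rewrite dflt_rcons.
  + have [_ [H2 _]] := HL _ Hvf (Hs' false).
    by move: (H2 _ Hf'); rewrite dflt_rcons.
- move=> i s.
  set sV' := dev sV i s.
  have Hdev : forall j, j != i -> sV j h a = sV' j h a.
    by move=> j Hj; rewrite /sV' /dev (negbTE Hj).
  have Hdevi : sV' i h a = s h a by rewrite /sV' /dev eqxx.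
  have Hvi : sV i h a = (u i z < u i po) by rewrite /sV (@sV0_eq _ _ uA u D T x0 k h a i Hs).
  have Hstep : u i (outV D x0 sA sV' k h a) <=
               u i (if passes D (fun j => sV' j h a) then po else z).
    rewrite /outV /po; case Hp: (passes _ _); case Ha2: a.2 => //=.
    + have Hvt : valid Xf (rcons h (a, true)) by apply: valid_rcons => //; rewrite Ha2.
      have [_ [_ H3]] := HL _ Hvt (Hs' true).
      by move: (H3 i s); rewrite dflt_rcons.
    + have [_ [_ H3]] := HL _ Hvf (Hs' false).
      by move: (H3 i s); rewrite dflt_rcons.
    + have [_ [_ H3]] := HL _ Hvf (Hs' false).
      by move: (H3 i s); rewrite dflt_rcons.
  apply: (leq_trans Hstep); rewrite /Wv -/sV -/po -/x -/z.
  case Hp': (passes D (fun j => sV' j h a)); case Hp: (passes D (fun j => sV j h a)) => //.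
  + have := @passes_dev n D (fun j => sV' j h a) (fun j => sV j h a) i.
    rewrite Hp Hp' /= => /(_ (fun j Hj => esym (Hdev j Hj)) isT isT).
    rewrite Hdevi Hvi => /andP [_]; by rewrite -leqNgt.
  + have := @passes_dev n D (fun j => sV j h a) (fun j => sV' j h a) i.
    rewrite Hp Hp' /= => /(_ Hdev isT isT).
    by rewrite Hvi => /andP [/ltnW].
- move=> i /=; rewrite Hpo Hfo /sV (@sV0_eq _ _ uA u D T x0 k h a i Hs) -/x -/z -/po.
  split => // Hlt; by rewrite -leqNgt ltnW.
Qed.

Lemma sA0_feas n (X : finType) (uA : X -> nat) (u : 'I_n -> X -> nat)
  (D : {set {set 'I_n}}) (Xf : history X -> {set proposal X}) (T : nat) (x0 : X) :
  gen_amendment Xf -> rich Xf -> feasibleA Xf (sA0 uA u D Xf T x0).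
Proof.
move=> Hg Hr h _; rewrite /sA0; case: ifP => // Hn.
case: (astar h (phi uA u D (dflt x0 h))
   (phi uA u D (iter (T - size h).-1 (phi uA u D) (dflt x0 h))) Hg Hr) => //.
by rewrite Hn.
Qed.

Lemma sA0_po n (X : finType) (uA : X -> nat) (u : 'I_n -> X -> nat)
  (D : {set {set 'I_n}}) (Xf : history X -> {set proposal X}) (T : nat) (x0 : X) k h :
  size h + k.+1 = T ->
  (let a := sA0 uA u D Xf T x0 h in if a.2 then a.1 else iter k (phi uA u D) a.1)
  = phi uA u D (iter k (phi uA u D) (dflt x0 h)).
Proof.
move=> Hs; rewrite /sA0 -Hs addKn /=.
by case: (_ \in Xf h) => //=; rewrite -iterSr iterS.
Qed.

Lemma Lall n (X : finType) (uA : X -> nat) (u : 'I_n -> X -> nat)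
  (D : {set {set 'I_n}}) (Xf : history X -> {set proposal X}) (T : nat) (x0 : X) :
  (forall i, injective (u i)) -> gen_amendment Xf -> rich Xf ->
  forall k, Lst uA u D Xf T x0 k.
Proof.
move=> Hu Hg Hr; elim=> [|k IH] h Hvh Hs.
  by split => //.
set sA := sA0 uA u D Xf T x0; set sV := sV0 uA u D T x0.
set x := dflt x0 h; set z := iter k (phi uA u D) x.
have Hfeas := sA0_feas uA u D T x0 Hg Hr.
have HW : forall a, a \in Xf h ->
  Mset u D z (Wv uA u D T x0 k h a) /\
  (Mset u D z (if a.2 then a.1 else iter k (phi uA u D) a.1) ->
     Wv uA u D T x0 k h a = (if a.2 then a.1 else iter k (phi uA u D) a.1)).
  move=> a Ha; have [V1 [_ [_ Vp]]] := Vnode IH Hvh Hs Ha.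
  rewrite -V1.
  have Hs' : forall b, size (rcons h (a, b)) + k = T by move=> b; rewrite size_rcons addSnnS.
  have Hvf : valid Xf (rcons h (a, false)) by apply: valid_rcons.
  have Hfo : z = outD D x0 sA sV k (rcons h (a, false)).
    by have [-> _] := IH _ Hvf (Hs' false); rewrite dflt_rcons.
  have Hpo : (if a.2 then a.1 else iter k (phi uA u D) a.1) =
             (if a.2 then a.1 else outD D x0 sA sV k (rcons h (a, true))).
    case Ha2: a.2 => //.
    have Hvt : valid Xf (rcons h (a, true)) by apply: valid_rcons => //; rewrite Ha2.
    by have [-> _] := IH _ Hvt (Hs' true); rewrite dflt_rcons.
  apply: outV_char => // i; move: (Vp i) => /=; rewrite -Hfo -Hpo; exact.
have HsA := Hfeas h Hvh.
have HL1 : outD D x0 sA sV k.+1 h = iter k.+1 (phi uA u D) x.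
  have -> : outD D x0 sA sV k.+1 h = outV D x0 sA sV k h (sA h) by [].
  have [V1 _] := Vnode IH Hvh Hs HsA.
  have [_ H2] := HW _ HsA.
  have Hpo := @sA0_po _ _ uA u D Xf T x0 k h Hs; simpl in Hpo.
  rewrite V1 H2 /sA Hpo ?iterS //; exact: phi_in.
split => //; split.
- move=> sA' Hf'.
  have -> : outD D x0 sA' sV k.+1 h = outV D x0 sA' sV k h (sA' h) by [].
  have Ha' := Hf' h Hvh.
  have [_ [V2 _]] := Vnode IH Hvh Hs Ha'.
  apply: (leq_trans (V2 _ Hf')); rewrite iterS -/x -/z.
  have [H1 _] := HW _ Ha'; exact: phi_max.
- move=> i s.
  have -> : outD D x0 sA (dev sV i s) k.+1 h = outV D x0 sA (dev sV i s) k h (sA h) by [].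
  have [V1 [_ [V3 _]]] := Vnode IH Hvh Hs HsA.
  rewrite -HL1; apply: (leq_trans (V3 i s)).
  by rewrite -V1.
Qed.

Lemma iter_fixed (X : Type) (f : X -> X) x k m :
  f (iter k f x) = iter k f x -> iter (m + k) f x = iter k f x.
Proof. move=> H; elim: m => //= m IH; by rewrite IH. Qed.

Lemma iter_stab n (X : finType) (uA : X -> nat) (u : 'I_n -> X -> nat)
  (D : {set {set 'I_n}}) T x0 :
  injective uA -> #|X| <= T.+1 ->
  phi uA u D (iter T (phi uA u D) x0) = iter T (phi uA u D) x0.
Proof.
move=> HuA HX; set f := phi uA u D.
case: (eqVneq (f (iter T f x0)) (iter T f x0)) => // Hne; exfalso.
have Hall : forall k, k <= T -> f (iter k f x0) != iter k f x0.
  move=> k Hk; apply/negP => /eqP Hk'.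
  have E1 := iter_fixed (T - k) Hk'; have E2 := iter_fixed (T - k).+1 Hk'.
  rewrite subnK // in E1; rewrite addSn subnK //= in E2.
  by move: Hne; rewrite E2 E1 eqxx.
have Hstep : forall k, k <= T -> uA (iter k f x0) < uA (iter k.+1 f x0).
  move=> k Hk; rewrite /= ltn_neqAle phi_ge andbT.
  apply/negP => /eqP /HuA E; move: (Hall k Hk); by rewrite -E eqxx.
have Hmono : forall i j, i < j -> j <= T.+1 -> uA (iter i f x0) < uA (iter j f x0).
  move=> i j; elim: j => // j IH Hij Hj.
  case: (ltngtP i j) => [Hlt | Hgt | ->].
  - apply: (ltn_trans (IH Hlt (ltnW Hj))); exact: Hstep.
  - by move: Hij; rewrite ltnS leqNgt Hgt.
  - exact: Hstep.
have Hinj : injective (fun i : 'I_T.+2 => iter i f x0).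
  move=> i j /= E; apply/val_inj => /=.
  case: (ltngtP i j) => // Hij.
  - have := Hmono _ _ Hij; rewrite -ltnS ltn_ord => /(_ isT); by rewrite E ltnn.
  - have := Hmono _ _ Hij; rewrite -ltnS ltn_ord => /(_ isT); by rewrite E ltnn.
have := leq_card _ Hinj; rewrite card_ord => H.
by move: (leq_trans H HX); rewrite ltnn.
Qed.

Lemma exists_eq n (X : finType) (uA : X -> nat) (u : 'I_n -> X -> nat)
  (D : {set {set 'I_n}}) (Xf : history X -> {set proposal X}) T x0 :
  (forall i, injective (u i)) -> gen_amendment Xf -> rich Xf ->
  is_equilibrium uA u D Xf T x0 (sA0 uA u D Xf T x0) (sV0 uA u D T x0).
Proof.
move=> Hu Hg Hr; split; first exact: sA0_feas.
split.
- move=> h Hvh HsT.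
  have Hs : size h + (T - size h) = T by rewrite subnKC // ltnW.
  have [L1 [L2 L3]] := @Lall _ _ uA u D Xf T x0 Hu Hg Hr (T - size h) h Hvh Hs.
  by rewrite L1; split.
- move=> h a Hvh HsT Ha.
  have Hs : size h + (T - size h).-1.+1 = T by rewrite prednK ?subn_gt0 // subnKC // ltnW.
  have [V1 [V2 [V3 Vp]]] := Vnode (@Lall _ _ uA u D Xf T x0 Hu Hg Hr _) Hvh Hs Ha.
  by rewrite V1; split.
Qed.

Unset Implicit Arguments. Set Strict Implicit.

Theorem theorem7 (n : nat) (X : finType) (uA : X -> nat) (u : 'I_n -> X -> nat)
  (D : {set {set 'I_n}}) (Xf : history X -> {set proposal X}) :
  0 < n ->
  injective uA -> (forall i, injective (u i)) ->
  gen_amendment Xf -> rich Xf ->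
  (forall (T : nat) (x0 : X),
     (exists sA sV, is_equilibrium uA u D Xf T x0 sA sV) /\
     (forall sA sV, is_equilibrium uA u D Xf T x0 sA sV ->
        eq_outcome D T x0 sA sV = iter T (phi uA u D) x0)) /\
  (forall T : nat, #|X|.-1 <= T ->
     forall x : X,
       (exists x0 sA sV, is_equilibrium uA u D Xf T x0 sA sV /\ eq_outcome D T x0 sA sV = x)
       <-> x \in E_D uA u D).
Proof.
move=> _ HuA Hu Hg Hr.
have P1 : forall (T : nat) (x0 : X),
     (exists sA sV, is_equilibrium uA u D Xf T x0 sA sV) /\
     (forall sA sV, is_equilibrium uA u D Xf T x0 sA sV ->
        eq_outcome D T x0 sA sV = iter T (phi uA u D) x0).
  move=> T x0; split; first by exists (sA0 uA u D Xf T x0), (sV0 uA u D T x0); exact: exists_eq.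
  move=> sA sV He; rewrite /eq_outcome.
  exact: (unique_out HuA Hu Hg Hr He (valid_nil Xf) (add0n T)).
split => // T HT x; split.
- move=> [x0 [sA [sV [He <-]]]].
  rewrite (proj2 (P1 T x0) _ _ He) unfold_in /E_D.
  apply/eqP; apply: iter_stab => //.
  by rewrite -ltnS in HT; apply: leq_trans HT; rewrite leqSpred.
- rewrite unfold_in /E_D => /eqP Hx.
  exists x, (sA0 uA u D Xf T x), (sV0 uA u D T x); split; first exact: exists_eq.
  rewrite (proj2 (P1 T x) _ _ (@exists_eq _ _ uA u D Xf T x Hu Hg Hr)).
  by elim: T {HT} => //= T ->.
Qed.
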